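(* Let $(\mathcal A,(p_n)_{n\in\mathbb N})$ and $(\mathcal B,(q_m)_{m\in\mathbb N})$ be Fréchet algebras and let $\varphi:\mathcal A\to\mathcal B$ be a continuous homomorphism with dense range. Let $I$ be a closed ideal of $\mathcal A$ and $J$ a closed ideal of $\mathcal B$ such that $\varphi(I)\subseteq J$. If $\mathcal A$ has a locally bounded approximate diagonal modulo $I$, then $\mathcal B$ has a locally bounded approximate diagonal modulo $J$.
   Context: A Fréchet algebra $(\mathcal A,(p_n))$ is a complete Hausdorff topological algebra whose topology is given by an increasing sequence $p_1\le p_2\le\cdots$ of submultiplicative seminorms. For a closed ideal $I$ of $\mathcal A$, $\mathcal A/I$ is a Fréchet algebra with seminorms $\hat p_n(a+I)=\inf\{p_n(a+b):b\in I\}$; write $\tilde a=a+I$. Let $\frac{\mathcal A}{I}\widehat\otimes\frac{\mathcal A}{I}$ be the completed projective tensor product, with seminorms $\hat r_n(M)=\inf\{\sum_i \hat p_n(x_i)\hat p_n(y_i): M=\sum_i x_i\otimes y_i\}$. It is an $\mathcal A$-bimodule via $a\cdot((b+I)\otimes(c+I))=(ab+I)\otimes(c+I)$ and $((b+I)\otimes(c+I))\cdot a=(b+I)\otimes(ca+I)$; $\mathcal A$ acts on $\mathcal A/I$ by $a\cdot(b+I)=ab+I$. The diagonal map $\pi_{\mathcal A/I}:\frac{\mathcal A}{I}\widehat\otimes\frac{\mathcal A}{I}\to\frac{\mathcal A}{I}$ is the continuous linear map with $(b+I)\otimes(c+I)\mapsto bc+I$. $\mathcal A$ has a locally bounded approximate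 diagonal modulo $I$ if there exist positive reals $C_n$ ($n\in\mathbb N$) such that for every finite set $F\subseteq\mathcal A\setminus I$, every $n\in\mathbb N$ and every $\varepsilon>0$ there is $M\in\frac{\mathcal A}{I}\widehat\otimes\frac{\mathcal A}{I}$ with $\hat r_n(M)\le C_n$, $\hat r_n(a\cdot M-M\cdot a)<\varepsilon$ for all $a\in F$, and $\hat p_n(a\cdot\pi_{\mathcal A/I}(M)-\tilde a)<\varepsilon$ for all $a\in\mathcal A$. The analogous notions are used for $\mathcal B$, $J$ and the seminorms $q_m$. *)

(* Defs.v *)
From HB Require Import structures.
From mathcomp Require Import all_boot all_order all_algebra.
From mathcomp Require Import all_classical all_reals all_analysis.
From mathcomp Require Import complex.

Set Implicit Arguments.
Unset Strict Implicit.
Unset Printing Implicit Defensive.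

Import Order.TTheory GRing.Theory Num.Theory.
Import numFieldNormedType.Exports.
Local Open Scope classical_set_scope.
Local Open Scope ring_scope.

(* Throughout: R is the real field, complex R = R[i] the scalar field.
   An algebra is an lmodType over R[i] together with an explicit
   (not necessarily unital) associative bilinear multiplication. *)

Definition is_seminorm (R : realType) (V : lmodType R[i]) (p : V -> R) : Prop :=
  [/\ (forall x, 0 <= p x),
      (forall x y, p (x + y) <= p x + p y) &
      (forall (k : R[i]) x, ((p (k *: x))%:C = `|k| * (p x)%:C)%C)].

Definition sn_cauchy (R : realType) (V : lmodType R[i]) (p : nat -> V -> R)
    (u : nat -> V) : Prop :=
  forall n (eps : R), 0 < eps -> exists N : nat,
    forall k l, (N <= k)%N -> (N <= l)%N -> p n (u k - u l) < eps.

Definition sn_converges (R : realType) (V : lmodType R[i]) (p : nat -> V -> R)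
    (u : nat -> V) (x : V) : Prop :=
  forall n (eps : R), 0 < eps -> exists N : nat,
    forall k, (N <= k)%N -> p n (u k - x) < eps.

Record frechet_algebra (R : realType) (V : lmodType R[i]) (mul : V -> V -> V)
    (p : nat -> V -> R) : Prop := FrechetAlgebra {
  fa_mulA : forall x y z, mul x (mul y z) = mul (mul x y) z;
  fa_mulDl : forall (k : R[i]) x y z, mul (k *: x + y) z = k *: mul x z + mul y z;
  fa_mulDr : forall (k : R[i]) x y z, mul x (k *: y + z) = k *: mul x y + mul x z;
  fa_seminorm : forall n, is_seminorm (p n);
  fa_submult : forall n x y, p n (mul x y) <= p n x * p n y;
  fa_incr : forall n x, p n x <= p n.+1 x;
  fa_hausdorff : forall x, (forall n, p n x = 0) -> x = 0;
  fa_complete : forall u, sn_cauchy p u -> exists x, sn_converges p u x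
}.

Definition closed_ideal (R : realType) (V : lmodType R[i]) (mul : V -> V -> V)
    (p : nat -> V -> R) (I : set V) : Prop :=
  [/\ I 0,
      (forall (k : R[i]) x y, I x -> I y -> I (k *: x + y)),
      (forall a x, I x -> I (mul a x) /\ I (mul x a)) &
      (forall x, (forall n (eps : R), 0 < eps -> exists y, I y /\ p n (x - y) < eps)
                 -> I x)].

Definition continuous_hom (R : realType) (V W : lmodType R[i])
    (mulV : V -> V -> V) (mulW : W -> W -> W)
    (p : nat -> V -> R) (q : nat -> W -> R) (phi : V -> W) : Prop :=
  [/\ (forall (k : R[i]) x y, phi (k *: x + y) = k *: phi x + phi y),
      (forall x y, phi (mulV x y) = mulW (phi x) (phi y)) &
      (forall x m (eps : R), 0 < eps -> exists n (delta : R), 0 < delta /\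
         forall y, p n (y - x) < delta -> q m (phi y - phi x) < eps)].

Definition dense_range (R : realType) (V W : lmodType R[i])
    (q : nat -> W -> R) (phi : V -> W) : Prop :=
  forall (b : W) m (eps : R), 0 < eps -> exists a : V, q m (b - phi a) < eps.

Definition qsn (R : realType) (V : lmodType R[i]) (p : nat -> V -> R)
    (I : set V) (n : nat) (x : V) : R :=
  inf [set p n (x + b) | b in I].

(** Elements of the algebraic tensor product (A/I) ⊗ (A/I) are represented by
    finite formal sums  sum_i (x_i + I) ⊗ (y_i + I), given by sequences of
    pairs (x_i, y_i) of representatives. *)
Definition bilinear_form (R : realType) (V : lmodType R[i]) (f : V -> V -> R[i])
  : Prop :=
  (forall (k : R[i]) x y z, f (k *: x + y) z = k * f x z + f y z) /\
  (forall (k : R[i]) x y z, f x (k *: y + z) = k * f x y + f x z).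

(* two formal sums represent the same element of (A/I) ⊗ (A/I): they agree
   under every bilinear form on (A/I) x (A/I) (universal property) *)
Definition tensor_eq (R : realType) (V : lmodType R[i]) (I : set V)
    (s t : seq (V * V)) : Prop :=
  forall f : V -> V -> R[i], bilinear_form f ->
    (forall x y, I x -> f x y = 0) -> (forall x y, I y -> f x y = 0) ->
    \sum_(z <- s) f z.1 z.2 = \sum_(z <- t) f z.1 z.2.

Definition rsn (R : realType) (V : lmodType R[i]) (p : nat -> V -> R)
    (I : set V) (n : nat) (s : seq (V * V)) : R :=
  inf [set \sum_(z <- t) qsn p I n z.1 * qsn p I n z.2 | t in tensor_eq I s].

Definition tsub (R : realType) (V : lmodType R[i]) (s t : seq (V * V))
  : seq (V * V) := s ++ [seq (- z.1, z.2) | z <- t].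

Definition tlact (R : realType) (V : lmodType R[i]) (mul : V -> V -> V)
    (a : V) (s : seq (V * V)) : seq (V * V) := [seq (mul a z.1, z.2) | z <- s].
Definition tract (R : realType) (V : lmodType R[i]) (mul : V -> V -> V)
    (s : seq (V * V)) (a : V) : seq (V * V) := [seq (z.1, mul z.2 a) | z <- s].

(* diagonal map, returning a representative in A of the class in A/I *)
Definition tpi (R : realType) (V : lmodType R[i]) (mul : V -> V -> V)
    (s : seq (V * V)) : V := \sum_(z <- s) mul z.1 z.2.

(** Elements of the completion  (A/I) \hat⊗ (A/I): Cauchy sequences of
    algebraic tensors for the seminorms \hat r_n. *)
Definition tensor_cauchy (R : realType) (V : lmodType R[i]) (p : nat -> V -> R)
    (I : set V) (M : nat -> seq (V * V)) : Prop :=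
  forall n (eps : R), 0 < eps -> exists N : nat,
    forall k l, (N <= k)%N -> (N <= l)%N -> rsn p I n (tsub (M k) (M l)) < eps.

(** locally bounded approximate diagonal modulo I.  Seminorms / maps on the
    completion are the continuous extensions, i.e. limits along the Cauchy
    sequence. *)
Definition lb_approx_diag_mod (R : realType) (V : lmodType R[i])
    (mul : V -> V -> V) (p : nat -> V -> R) (I : set V) : Prop :=
  exists C : nat -> R, (forall n, 0 < C n) /\
  forall F : seq V, (forall a, a \in F -> ~ I a) ->
  forall (n : nat) (eps : R), 0 < eps ->
  exists M : nat -> seq (V * V),
    [/\ tensor_cauchy p I M,
        limn (fun k => rsn p I n (M k)) <= C n,
        (forall a, a \in F ->
           limn (fun k => rsn p I n (tsub (tlact mul a (M k)) (tract mul (M k) a)))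
             < eps) &
        (forall a, limn (fun k => qsn p I n (mul a (tpi mul (M k)) - a)) < eps)].

(* Main.v *)
Require Import Defs.
From HB Require Import structures.
From mathcomp Require Import all_boot all_order all_algebra.
From mathcomp Require Import all_classical all_reals all_analysis.
From mathcomp Require Import complex.
From mathcomp Require Import ring lra.
Set Implicit Arguments.
Unset Strict Implicit.
Unset Printing Implicit Defensive.
Import Order.TTheory GRing.Theory Num.Theory.
Import numFieldNormedType.Exports.
Local Open Scope classical_set_scope.
Local Open Scope ring_scope.
Section Sep.
Variable R : realType.
Variables (V : lmodType R[i]) (I : set V).
Hypothesis I0 : I 0.
Hypothesis Ilin : forall (k : R[i]) x y, I x -> I y -> I (k *: x + y).

Lemma sep v : ~ I v -> exists lam : V -> R[i],
  [/\ (forall k x y, lam (k *: x + y) = k * lam x + lam y),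
      (forall x, I x -> lam x = 0) & lam v = 1].
Proof.
move=> nIv.
pose P (W : set V) := (forall (k : R[i]) x y, (I `|` W) x -> (I `|` W) y ->
   (I `|` W) (k *: x + y)) /\ ~ (I `|` W) v.
have [A [[HA nHv] Amax]] : exists A, P A /\ forall B, A `<` B -> ~ P B.
  apply: Zorn_bigcup => F FP Ftot; split.
    move=> k x y [hx|[X FX hx]] [hy|[Y FY hy]].
    - by left; apply: Ilin.
    - have [H _] := FP _ FY; case: (H k x y (or_introl hx) (or_intror hy)) => h.
        by left.
      by right; exists Y.
    - have [H _] := FP _ FX; case: (H k x y (or_intror hx) (or_introl hy)) => h.
        by left.
      by right; exists X.
    - have [XY|YX] := Ftot _ _ FX FY.
      + have [H _] := FP _ FY.
        case: (H k x y (or_intror (XY _ hx)) (or_intror hy)) => h; first by left.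
        by right; exists Y.
      + have [H _] := FP _ FX.
        case: (H k x y (or_intror hx) (or_intror (YX _ hy))) => h; first by left.
        by right; exists X.
  case=> [//|[X FX hX]]; have [_ H] := FP _ FX; apply: H; by right.
pose H := I `|` A.
have H0 : H 0 by left.
have HZ k x : H x -> H (k *: x).
  by move=> hx; have := HA k x 0 hx H0; rewrite addr0.
have HD x y : H x -> H y -> H (x + y).
  by move=> hx hy; have := HA 1 x y hx hy; rewrite scale1r.
have HN x : H x -> H (- x) by move=> hx; rewrite -scaleN1r; exact: HZ.
have ex x : exists c : R[i], H (x - c *: v).
  have [hx|nhx] := pselect (H x); first by exists 0; rewrite scale0r subr0.
  pose B := [set y | exists h k, H h /\ y = h + k *: x].
  have AB : A `<` B.
    split.
      by move=> y Ay; exists y, 0; split; [right|rewrite scale0r addr0].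
    by move=> BA; apply: nhx; right; apply: BA; exists 0, 1; rewrite add0r scale1r.
  have IB : I `<=` B by move=> y Iy; exists y, 0; split; [left|rewrite scale0r addr0].
  have IBB z : (I `|` B) z -> B z by case=> // /IB.
  have : ~ P B by exact: Amax.
  move=> nPB.
  have Bv : B v.
    apply: (IBB v); apply: contrapT => nBv; apply: nPB; split => //.
    move=> k y z /IBB [h1 [k1 [h1H ->]]] /IBB [h2 [k2 [h2H ->]]]; right.
    exists (k *: h1 + h2), (k * k1 + k2); split.
      by apply: HD => //; exact: HZ.
    by rewrite scalerDr scalerDl scalerA addrACA.
  case: Bv => h [k [hH vE]].
  have k0 : k != 0.
    by apply/eqP => k0; apply: nHv; rewrite vE k0 scale0r addr0.
  exists k^-1; rewrite vE scalerDr scalerA mulVf // scale1r opprD addrCA subrr addr0.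
  exact/HN/HZ.
have uniq x c c' : H (x - c *: v) -> H (x - c' *: v) -> c = c'.
  move=> h1 h2; apply/eqP; apply: contraT => neq; exfalso; apply: nHv.
  have := HD _ _ h1 (HN _ h2).
  rewrite opprB addrC -addrA addKr -scalerBl => h3.
  have := HZ ((c' - c)^-1) _ h3; rewrite scalerA mulVf ?scale1r // subr_eq0 eq_sym //.
have [lam hlam] := choice ex.
exists lam; split.
- move=> k x y; apply: (uniq (k *: x + y)) => //.
  have := HD _ _ (HZ k _ (hlam x)) (hlam y).
  by rewrite scalerBr scalerA scalerDl opprD addrACA.
- by move=> x Ix; apply: (uniq x) => //; rewrite scale0r subr0; left.
- by apply: (uniq v) => //; rewrite scale1r subrr.
Qed.
End Sep.
Section Reals.
Variable R : realType.

Lemma le_eps (a y K : R) : 0 <= K -> (forall e, 0 < e -> a <= y + K * e) -> a <= y.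
Proof.
move=> K0 H; apply/ler_addgt0Pr => e e0.
have K1 : 0 < K + 1 by lra.
apply: (le_trans (H (e / (K + 1)) _)); first by rewrite divr_gt0.
rewrite lerD2l mulrA ler_pdivrMr //; nra.
Qed.

Lemma inf_le_elt (S : set R) x : (forall y, S y -> 0 <= y) -> S x -> inf S <= x.
Proof. move=> H Sx; apply: ge_inf => //; exists 0 => y /H. done. Qed.

Lemma le_inf_lb (S : set R) c : S !=set0 -> (forall y, S y -> c <= y) -> c <= inf S.
Proof. by move=> ne H; apply: lb_le_inf. Qed.

Lemma inf_approx (S : set R) e : S !=set0 -> 0 < e -> exists2 y, S y & y < inf S + e.
Proof. move=> ne e0; apply: inf_lt => //; lra. Qed.

Lemma inf_ge0 (S : set R) : S !=set0 -> (forall y, S y -> 0 <= y) -> 0 <= inf S.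
Proof. exact: le_inf_lb. Qed.
End Reals.
Section Reals2.
Variable R : realType.
Lemma inf_lb_mul (S : set R) c K : S !=set0 -> 0 <= K ->
  (forall y, S y -> c <= K * y) -> c <= K * inf S.
Proof.
move=> ne K0 H; apply: (le_eps K0) => e e0.
have [y Sy lt] := inf_approx ne e0.
apply: (le_trans (H y Sy)); rewrite -mulrDr.
by apply: ler_wpM2l => //; exact: ltW.
Qed.
End Reals2.
Section Reals3.
Variable R : realType.
Lemma small_mul (K e r : R) : 0 <= K -> 0 <= r -> r < e / (K + 1) -> K * r < e.
Proof.
move=> K0 r0; rewrite ltr_pdivlMr; last by lra.
nra.
Qed.
End Reals3.
Require Import Defs.
From HB Require Import structures.
From mathcomp Require Import all_boot all_order all_algebra.
From mathcomp Require Import all_classical all_reals all_analysis.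
From mathcomp Require Import complex.
Set Implicit Arguments.
Unset Strict Implicit.
Unset Printing Implicit Defensive.
Import Order.TTheory GRing.Theory Num.Theory.
Import numFieldNormedType.Exports.
Local Open Scope classical_set_scope.
Local Open Scope ring_scope.

Section Gen.
Variable R : realType.

Lemma cvg_of_cauchyR (u : nat -> R) :
  (forall e : R, 0 < e -> exists N, forall k l, (N <= k)%N -> (N <= l)%N -> u k - u l < e) ->
  cvgn u.
Proof.
move=> H; apply/cauchy_cvgP; apply/cauchy_ballP => e e0.
have [N HN] := H e e0.
rewrite near_simpl. exists ([set k | (N <= k)%N], [set k | (N <= k)%N]).
  by split; exists N.
move=> [k l] [/= hk hl]; rewrite /ball /= ltr_norml; apply/andP; split.
  by rewrite ltrNl opprB; apply: HN.
by apply: HN.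
Qed.

Lemma limn_le_ev (u : nat -> R) c : cvgn u ->
  (exists N, forall k, (N <= k)%N -> u k <= c) -> limn u <= c.
Proof.
move=> cu [N HN]; apply: limr_le => //; exists N => // k /= hk; exact: HN.
Qed.

Lemma limn_lt_ev (u : nat -> R) c : cvgn u -> limn u < c ->
  exists N, forall k, (N <= k)%N -> u k < c.
Proof.
move=> cu lc; have [N _ HN] := @cvgr_lt R _ _ _ u (limn u) cu c lc; exists N => k hk; exact: HN.
Qed.
End Gen.
Section Alg.
Variable R : realType.
Variables (V : lmodType R[i]) (mul : V -> V -> V) (p : nat -> V -> R) (I : set V).
Hypothesis FA : frechet_algebra mul p.
Hypothesis CI : closed_ideal mul p I.

Lemma sn_ge0 n x : 0 <= p n x.
Proof. by case: (fa_seminorm FA n). Qed.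
Lemma sn_tri n x y : p n (x + y) <= p n x + p n y.
Proof. by case: (fa_seminorm FA n). Qed.
Lemma sn_scaleR n (t : R) x : 0 <= t -> p n (t%:C%C *: x) = t * p n x.
Proof.
move=> t0; case: (fa_seminorm FA n) => _ _ /(_ t%:C%C x).
rewrite ger0_norm ?ler0c // -rmorphM; exact: complexI.
Qed.
Lemma sn_opp n x : p n (- x) = p n x.
Proof.
case: (fa_seminorm FA n) => _ _ /(_ (-1) x).
rewrite scaleN1r normrN normr1 mul1r; exact: complexI.
Qed.
Lemma sn0 n : p n 0 = 0.
Proof. by have := sn_scaleR n 0 (lexx 0); rewrite mul0r scaler0. Qed.
Lemma sn_mul n x y : p n (mul x y) <= p n x * p n y.
Proof. exact: (fa_submult FA n x y). Qed.

Lemma I0 : I 0. Proof. by case: CI. Qed.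
Lemma ID x y : I x -> I y -> I (x + y).
Proof. by case: CI => _ H _ _ hx hy; have := H 1 x y hx hy; rewrite scale1r. Qed.
Lemma IN x : I x -> I (- x).
Proof. by case: CI => _ H _ _ hx; have := H (-1) x 0 hx I0; rewrite scaleN1r addr0. Qed.
Lemma IB x y : I x -> I y -> I (x - y).
Proof. by move=> hx hy; apply: ID => //; exact: IN. Qed.
Lemma IZ k x : I x -> I (k *: x).
Proof. by case: CI => _ H _ _ hx; have := H k x 0 hx I0; rewrite addr0. Qed.
Lemma Imull a x : I x -> I (mul a x).
Proof. by case: CI => _ _ H _ /(H a) []. Qed.
Lemma Imulr a x : I x -> I (mul x a).
Proof. by case: CI => _ _ H _ /(H a) []. Qed.

Lemma mulDl x y z : mul (x + y) z = mul x z + mul y z.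
Proof. by have := fa_mulDl FA 1 x y z; rewrite !scale1r. Qed.
Lemma mulDr x y z : mul x (y + z) = mul x y + mul x z.
Proof. by have := fa_mulDr FA 1 x y z; rewrite !scale1r. Qed.
Lemma mul0l z : mul 0 z = 0.
Proof. by apply: (addrI (mul 0 z)); rewrite -mulDl !addr0. Qed.
Lemma mul0r z : mul z 0 = 0.
Proof. by apply: (addrI (mul z 0)); rewrite -mulDr !addr0. Qed.
Lemma mulZl k x z : mul (k *: x) z = k *: mul x z.
Proof. by have := fa_mulDl FA k x 0 z; rewrite !addr0 mul0l addr0. Qed.
Lemma mulZr k x z : mul x (k *: z) = k *: mul x z.
Proof. by have := fa_mulDr FA k x z 0; rewrite !addr0 mul0r addr0. Qed.
Lemma mulNl x z : mul (- x) z = - mul x z.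
Proof. by rewrite -scaleN1r mulZl scaleN1r. Qed.
Lemma mulNr x z : mul x (- z) = - mul x z.
Proof. by rewrite -scaleN1r mulZr scaleN1r. Qed.
Lemma mulBl x y z : mul (x - y) z = mul x z - mul y z.
Proof. by rewrite mulDl mulNl. Qed.
Lemma mulBr x y z : mul x (y - z) = mul x y - mul x z.
Proof. by rewrite mulDr mulNr. Qed.

Definition qS n x := [set p n (x + b) | b in I].
Lemma qS_ne n x : qS n x !=set0.
Proof. by exists (p n (x + 0)); exists 0 => //; exact: I0. Qed.
Lemma qS_ge0 n x y : qS n x y -> 0 <= y.
Proof. by case=> b _ <-; exact: sn_ge0. Qed.

Lemma qsn_ge0 n x : 0 <= qsn p I n x.
Proof. apply: inf_ge0; [exact: qS_ne | exact: qS_ge0]. Qed.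
Lemma qsn_le n x b : I b -> qsn p I n x <= p n (x + b).
Proof. by move=> hb; apply: inf_le_elt; [exact: qS_ge0 | exists b]. Qed.
Lemma qsn_le_p n x : qsn p I n x <= p n x.
Proof. by have := qsn_le n x I0; rewrite addr0. Qed.
Lemma qsn_lb n x c : (forall b, I b -> c <= p n (x + b)) -> c <= qsn p I n x.
Proof. by move=> H; apply: le_inf_lb; [exact: qS_ne | move=> _ [b hb <-]; exact: H]. Qed.
Lemma qsn_approx n x e : 0 < e -> exists2 b, I b & p n (x + b) < qsn p I n x + e.
Proof. by move=> e0; have [_ [b hb <-] ?] := inf_approx (qS_ne n x) e0; exists b. Qed.

Lemma qsn_lb_mul n x c K : 0 <= K -> (forall b, I b -> c <= p n (x + b) * K) ->
  c <= qsn p I n x * K.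
Proof.
move=> K0 H; apply: (le_eps K0) => e e0.
have [b hb lt] := qsn_approx n x e0.
apply: (le_trans (H b hb)); rewrite mulrC [qsn _ _ _ _ * _]mulrC -mulrDr.
by apply: ler_wpM2l => //; exact: ltW.
Qed.

Lemma qsn_leI n x y : I (x - y) -> qsn p I n x <= qsn p I n y.
Proof.
move=> hxy; apply: qsn_lb => b hb.
have hyx : I (y - x) by rewrite -opprB; exact: IN.
apply: (le_trans (qsn_le n x (ID hyx hb))).
by rewrite addrCA addrA addrNK.
Qed.
Lemma qsn_eqI n x y : I (x - y) -> qsn p I n x = qsn p I n y.
Proof.
move=> h; apply/eqP; rewrite eq_le !qsn_leI //.
by rewrite -opprB; exact: IN.
Qed.
Lemma qsn_I n b : I b -> qsn p I n b = 0.
Proof.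
move=> hb; apply/eqP; rewrite eq_le qsn_ge0 andbT.
by have := qsn_le n b (IN hb); rewrite addrN sn0.
Qed.
Lemma qsn_opp n x : qsn p I n (- x) = qsn p I n x.
Proof.
have H y : qsn p I n (- y) <= qsn p I n y.
  apply: qsn_lb => b hb; apply: (le_trans (qsn_le n (- y) (IN hb))).
  by rewrite -opprD sn_opp.
by apply/eqP; rewrite eq_le H /=; have := H (- x); rewrite opprK.
Qed.
Lemma qsn_tri n x y : qsn p I n (x + y) <= qsn p I n x + qsn p I n y.
Proof.
have H := @qsn_lb_mul n x (qsn p I n (x + y) - qsn p I n y) 1 ler01.
rewrite -lerBlDr -[qsn p I n x]mulr1; apply: H => b hb.
rewrite mulr1 lerBlDr [p n (x + b) + _]addrC -lerBlDr; apply: qsn_lb => b2 hb2.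
rewrite lerBlDr; apply: (le_trans (qsn_le n (x + y) (ID hb hb2))).
by rewrite addrACA addrC sn_tri.
Qed.
Lemma qsn_sub n x y : qsn p I n x - qsn p I n y <= qsn p I n (x - y).
Proof. by rewrite lerBlDr; have := qsn_tri n (x - y) y; rewrite addrNK. Qed.

Lemma qsn_mull n a x : qsn p I n (mul a x) <= p n a * qsn p I n x.
Proof.
rewrite mulrC; apply: qsn_lb_mul => [|b hb]; first exact: sn_ge0.
apply: (le_trans (qsn_le n _ (Imull a hb))); rewrite -mulDr mulrC; exact: sn_mul.
Qed.
Lemma qsn_mulr n a x : qsn p I n (mul x a) <= qsn p I n x * p n a.
Proof.
apply: qsn_lb_mul => [|b hb]; first exact: sn_ge0.
apply: (le_trans (qsn_le n _ (Imulr a hb))); rewrite -mulDl; exact: sn_mul.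
Qed.
Lemma qsn_mul n x y : qsn p I n (mul x y) <= qsn p I n x * qsn p I n y.
Proof.
apply: qsn_lb_mul => [|b hb]; first exact: qsn_ge0.
rewrite (@qsn_eqI n (mul x y) (mul (x + b) y)); first exact: qsn_mull.
by rewrite mulDl opprD addrA addrN add0r; apply: IN; exact: Imulr.
Qed.

Definition Ef (f : V -> V -> R[i]) (s : seq (V * V)) := \sum_(z <- s) f z.1 z.2.
Definition good (f : V -> V -> R[i]) := [/\ bilinear_form f,
  (forall x y, I x -> f x y = 0) & (forall x y, I y -> f x y = 0)].

Lemma teqP s t : tensor_eq I s t <-> (forall f, good f -> Ef f s = Ef f t).
Proof.
split=> [H f [b h1 h2]|H f b h1 h2]; first exact: H.
by apply: H; split.
Qed.

Lemma teq_refl s : tensor_eq I s s. Proof. by apply/teqP. Qed.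
Lemma teq_sym s t : tensor_eq I s t -> tensor_eq I t s.
Proof. by move/teqP=> H; apply/teqP => f /H. Qed.
Lemma teq_trans s t u : tensor_eq I s t -> tensor_eq I t u -> tensor_eq I s u.
Proof. by move=> /teqP H1 /teqP H2; apply/teqP => f g; rewrite H1 // H2. Qed.

Section GoodF.
Variable f : V -> V -> R[i].
Hypothesis gf : good f.
Lemma gDl x y z : f (x + y) z = f x z + f y z.
Proof. by case: gf => [[H _] _ _]; have := H 1 x y z; rewrite scale1r mul1r. Qed.
Lemma gDr x y z : f x (y + z) = f x y + f x z.
Proof. by case: gf => [[_ H] _ _]; have := H 1 x y z; rewrite scale1r mul1r. Qed.
Lemma g0l z : f 0 z = 0.
Proof. by apply: (addrI (f 0 z)); rewrite -gDl !addr0. Qed.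
Lemma g0r z : f z 0 = 0.
Proof. by apply: (addrI (f z 0)); rewrite -gDr !addr0. Qed.
Lemma gNl x z : f (- x) z = - f x z.
Proof.
case: gf => [[H _] _ _]; have := H (-1) x 0 z.
by rewrite scaleN1r addr0 g0l addr0 mulN1r.
Qed.
Lemma gNr x z : f x (- z) = - f x z.
Proof.
case: gf => [[_ H] _ _]; have := H (-1) x z 0.
by rewrite scaleN1r addr0 g0r addr0 mulN1r.
Qed.
End GoodF.

Lemma Ef_cat f s t : Ef f (s ++ t) = Ef f s + Ef f t.
Proof. by rewrite /Ef big_cat. Qed.
Definition tneg (t : seq (V * V)) := [seq (- z.1, z.2) | z <- t].
Lemma tsubE s t : tsub s t = s ++ tneg t. Proof. by []. Qed.
Lemma Ef_neg f t : good f -> Ef f (tneg t) = - Ef f t.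
Proof.
move=> g; rewrite /Ef big_map -sumrN; apply: eq_bigr => z _ /=; exact: gNl.
Qed.
Lemma Ef_sub f s t : good f -> Ef f (tsub s t) = Ef f s - Ef f t.
Proof. by move=> g; rewrite tsubE Ef_cat Ef_neg. Qed.
Lemma Ef_lact f a s : Ef f (tlact mul a s) = Ef (fun x y => f (mul a x) y) s.
Proof. by rewrite /Ef big_map. Qed.
Lemma Ef_ract f a s : Ef f (tract mul s a) = Ef (fun x y => f x (mul y a)) s.
Proof. by rewrite /Ef big_map. Qed.

Lemma good_lact f a : good f -> good (fun x y => f (mul a x) y).
Proof.
case=> [[H1 H2] H3 H4]; split; [split|..].
- by move=> k x y z; rewrite (fa_mulDr FA) H1.
- by move=> k x y z; rewrite H2.
- by move=> x y hx; apply: H3; exact: Imull.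
- by move=> x y hy; apply: H4.
Qed.
Lemma good_ract f a : good f -> good (fun x y => f x (mul y a)).
Proof.
case=> [[H1 H2] H3 H4]; split; [split|..].
- by move=> k x y z; rewrite H1.
- by move=> k x y z; rewrite (fa_mulDl FA) H2.
- by move=> x y hx; apply: H3.
- by move=> x y hy; apply: H4; exact: Imulr.
Qed.

Lemma teq_cat s s' t t' : tensor_eq I s s' -> tensor_eq I t t' ->
  tensor_eq I (s ++ t) (s' ++ t').
Proof. by move=> /teqP H1 /teqP H2; apply/teqP => f g; rewrite !Ef_cat H1 // H2. Qed.
Lemma teq_neg s s' : tensor_eq I s s' -> tensor_eq I (tneg s) (tneg s').
Proof. by move=> /teqP H; apply/teqP => f g; rewrite !Ef_neg // H. Qed.
Lemma teq_lact a s s' : tensor_eq I s s' -> tensor_eq I (tlact mul a s) (tlact mul a s').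
Proof. by move=> /teqP H; apply/teqP => f g; rewrite !Ef_lact H //; exact: good_lact. Qed.
Lemma teq_ract a s s' : tensor_eq I s s' -> tensor_eq I (tract mul s a) (tract mul s' a).
Proof. by move=> /teqP H; apply/teqP => f g; rewrite !Ef_ract H //; exact: good_ract. Qed.

Definition TS n (t : seq (V * V)) := \sum_(z <- t) qsn p I n z.1 * qsn p I n z.2.
Definition rS n s := [set TS n t | t in tensor_eq I s].
Lemma TS_ge0 n t : 0 <= TS n t.
Proof. by apply: sumr_ge0 => z _; apply: mulr_ge0; exact: qsn_ge0. Qed.
Lemma TS_cat n s t : TS n (s ++ t) = TS n s + TS n t.
Proof. by rewrite /TS big_cat. Qed.
Lemma TS_neg n t : TS n (tneg t) = TS n t.
Proof. by rewrite /TS big_map; apply: eq_bigr => z _ /=; rewrite qsn_opp. Qed.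
Lemma TS_lact n a t : TS n (tlact mul a t) <= p n a * TS n t.
Proof.
rewrite /TS big_map mulr_sumr; apply: ler_sum => z _ /=.
rewrite mulrA; apply: ler_wpM2r; [exact: qsn_ge0 | exact: qsn_mull].
Qed.
Lemma TS_ract n a t : TS n (tract mul t a) <= p n a * TS n t.
Proof.
rewrite /TS big_map mulr_sumr; apply: ler_sum => z _ /=.
rewrite mulrCA; apply: ler_wpM2l; first exact: qsn_ge0.
by rewrite mulrC; exact: qsn_mulr.
Qed.

Lemma rS_ne n s : rS n s !=set0.
Proof. by exists (TS n s); exists s => //; exact: teq_refl. Qed.
Lemma rS_ge0 n s y : rS n s y -> 0 <= y.
Proof. by case=> t _ <-; exact: TS_ge0. Qed.
Lemma rsn_ge0 n s : 0 <= rsn p I n s.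
Proof. apply: inf_ge0; [exact: rS_ne | exact: rS_ge0]. Qed.
Lemma rsn_le n s t : tensor_eq I s t -> rsn p I n s <= TS n t.
Proof. by move=> h; apply: inf_le_elt; [exact: rS_ge0 | exists t]. Qed.
Lemma rsn_lb n s c : (forall t, tensor_eq I s t -> c <= TS n t) -> c <= rsn p I n s.
Proof. by move=> H; apply: le_inf_lb; [exact: rS_ne | move=> _ [t ht <-]; exact: H]. Qed.
Lemma rsn_lb_mul n s c K : 0 <= K -> (forall t, tensor_eq I s t -> c <= K * TS n t) ->
  c <= K * rsn p I n s.
Proof.
by move=> K0 H; apply: inf_lb_mul => //; [exact: rS_ne | move=> _ [t ht <-]; exact: H].
Qed.
Lemma rsn_approx n s e : 0 < e -> exists2 t, tensor_eq I s t & TS n t < rsn p I n s + e.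
Proof. by move=> e0; have [_ [t ht <-] ?] := inf_approx (rS_ne n s) e0; exists t. Qed.

Lemma rsn_teq n s s' : tensor_eq I s s' -> rsn p I n s <= rsn p I n s'.
Proof.
move=> h; apply: rsn_lb => t ht; apply: rsn_le; exact: teq_trans h ht.
Qed.
Lemma rsn_teqE n s s' : tensor_eq I s s' -> rsn p I n s = rsn p I n s'.
Proof. by move=> h; apply/eqP; rewrite eq_le !rsn_teq //; exact: teq_sym. Qed.

Lemma rsn_cat n s t : rsn p I n (s ++ t) <= rsn p I n s + rsn p I n t.
Proof.
apply: (@le_eps _ _ _ 2) => // e e0.
have [s1 h1 l1] := rsn_approx n s e0.
have [t1 h2 l2] := rsn_approx n t e0.
apply: (le_trans (rsn_le n (teq_cat h1 h2))); rewrite TS_cat; lra.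
Qed.
Lemma rsn_neg n s : rsn p I n (tneg s) <= rsn p I n s.
Proof.
apply: rsn_lb => t ht; rewrite -TS_neg; apply: rsn_le; exact: teq_neg.
Qed.
Lemma rsn_lact n a s : rsn p I n (tlact mul a s) <= p n a * rsn p I n s.
Proof.
apply: rsn_lb_mul; first exact: sn_ge0.
move=> t ht; apply: le_trans (TS_lact n a t); apply: rsn_le; exact: teq_lact.
Qed.
Lemma rsn_ract n a s : rsn p I n (tract mul s a) <= p n a * rsn p I n s.
Proof.
apply: rsn_lb_mul; first exact: sn_ge0.
move=> t ht; apply: le_trans (TS_ract n a t); apply: rsn_le; exact: teq_ract.
Qed.
Lemma rsn_nil n : rsn p I n [::] = 0.
Proof.
apply/eqP; rewrite eq_le rsn_ge0 andbT.
by have := rsn_le n (teq_refl [::]); rewrite /TS big_nil.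
Qed.
Lemma rsn_sub_tri n s t : rsn p I n s - rsn p I n t <= rsn p I n (tsub s t).
Proof.
rewrite lerBlDr; apply: le_trans (rsn_cat n (tsub s t) t).
apply: rsn_teq; apply/teqP => f g; rewrite Ef_cat Ef_sub //; by rewrite addrNK.
Qed.
Definition Dt (c : V) (s : seq (V * V)) := tsub (tlact mul c s) (tract mul s c).

Lemma rsn_D n c s : rsn p I n (Dt c s) <= 2 * p n c * rsn p I n s.
Proof.
apply: le_trans (rsn_cat _ _ _) _.
apply: le_trans (lerD (rsn_lact n c s) (le_trans (rsn_neg _ _) (rsn_ract n c s))) _.
by rewrite -mulrA mulr_natl mulr2n.
Qed.

Lemma Ef_D f c s : good f -> Ef f (Dt c s) =
  Ef (fun x y => f (mul c x) y) s - Ef (fun x y => f x (mul y c)) s.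
Proof. by move=> g; rewrite /Dt Ef_sub // Ef_lact Ef_ract. Qed.

Lemma teq_D_sub c s t : tensor_eq I (tsub (Dt c s) (Dt c t)) (Dt c (tsub s t)).
Proof.
apply/teqP => f g; have g1 := good_lact c g; have g2 := good_ract c g.
rewrite Ef_sub // !Ef_D // (Ef_sub _ _ g1) (Ef_sub _ _ g2).
ring.
Qed.

Lemma Ef_mulBl f c d s : good f ->
  Ef (fun x y => f (mul c x) y) s =
  Ef (fun x y => f (mul (c - d) x) y) s + Ef (fun x y => f (mul d x) y) s.
Proof.
by move=> g; rewrite /Ef -big_split; apply: eq_bigr => z _ /=; rewrite mulBl (gDl g) (gNl g) subrK.
Qed.
Lemma Ef_mulBr f c d s : good f ->
  Ef (fun x y => f x (mul y c)) s =
  Ef (fun x y => f x (mul y (c - d))) s + Ef (fun x y => f x (mul y d)) s.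
Proof.
by move=> g; rewrite /Ef -big_split; apply: eq_bigr => z _ /=; rewrite mulBr (gDr g) (gNr g) subrK.
Qed.

Lemma teq_D_split c d s : tensor_eq I (Dt c s) (Dt (c - d) s ++ Dt d s).
Proof.
apply/teqP => f g; rewrite Ef_cat !Ef_D // (@Ef_mulBl f c d s g) (@Ef_mulBr f c d s g).
by rewrite opprD addrACA.
Qed.

Lemma teq_D_I c s : I c -> tensor_eq I (Dt c s) [::].
Proof.
move=> hc; apply/teqP => f g; rewrite Ef_D // /Ef big_nil.
case: g => _ h1 h2.
rewrite big1 ?sub0r ?big1 ?oppr0 // => z _.
  by apply: h2; exact: Imull.
by apply: h1; exact: Imulr.
Qed.

Lemma rsn_D_I n c s : I c -> rsn p I n (Dt c s) = 0.
Proof. by move=> hc; rewrite (rsn_teqE n (teq_D_I s hc)) rsn_nil. Qed.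

Lemma tpi_cat s t : tpi mul (s ++ t) = tpi mul s + tpi mul t.
Proof. by rewrite /tpi big_cat. Qed.
Lemma tpi_sub s t : tpi mul (tsub s t) = tpi mul s - tpi mul t.
Proof.
rewrite tsubE tpi_cat; congr (_ + _); rewrite /tpi big_map -sumrN.
by apply: eq_bigr => z _ /=; rewrite mulNl.
Qed.
Lemma qsn_tpi_TS n t : qsn p I n (tpi mul t) <= TS n t.
Proof.
elim: t => [|z t IH]; first by rewrite /tpi /TS !big_nil qsn_I //; exact: I0.
rewrite /tpi /TS !big_cons; apply: le_trans (qsn_tri _ _ _) _.
by apply: lerD => //; exact: qsn_mul.
Qed.

Lemma tpi_teq s t : tensor_eq I s t -> I (tpi mul s - tpi mul t).
Proof.
move=> /teqP H; apply: contrapT => nI.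
have [lam [lin lamI lam1]] := @sep R V I I0 (fun k x y hx hy => match CI with
  And4 _ h _ _ => h k x y hx hy end) _ nI.
have lamD x y : lam (x + y) = lam x + lam y by rewrite -[x]scale1r lin mul1r scale1r.
have lam0 : lam 0 = 0 by apply: lamI; exact: I0.
have lamN x : lam (- x) = - lam x.
  by rewrite -scaleN1r -[_ *: x]addr0 lin lam0 addr0 mulN1r.
have lamS (u : seq (V * V)) : lam (tpi mul u) = Ef (fun x y => lam (mul x y)) u.
  elim: u => [|z u IH]; first by rewrite /tpi /Ef !big_nil.
  by rewrite /tpi /Ef !big_cons lamD IH.
have g : good (fun x y => lam (mul x y)).
  split; [split|..].
  - by move=> k x y z; rewrite (fa_mulDl FA) lin.
  - by move=> k x y z; rewrite (fa_mulDr FA) lin.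
  - by move=> x y hx; apply: lamI; exact: Imulr.
  - by move=> x y hy; apply: lamI; exact: Imull.
have := H _ g; rewrite -!lamS => e.
have : lam (tpi mul s - tpi mul t) = 0 by rewrite lamD lamN e subrr.
by rewrite lam1 => /eqP; rewrite oner_eq0.
Qed.

Lemma qsn_tpi n s : qsn p I n (tpi mul s) <= rsn p I n s.
Proof.
apply: rsn_lb => t ht; rewrite (@qsn_eqI n _ (tpi mul t)); first exact: qsn_tpi_TS.
exact: tpi_teq.
Qed.
Lemma cvg_rsn M n : tensor_cauchy p I M -> cvgn (fun k => rsn p I n (M k)).
Proof.
move=> HM; apply: cvg_of_cauchyR => e e0; have [N HN] := HM n e e0.
exists N => k l hk hl; exact: le_lt_trans (rsn_sub_tri n _ _) (HN k l hk hl).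
Qed.

Lemma cvg_rsnD M n c : tensor_cauchy p I M -> cvgn (fun k => rsn p I n (Dt c (M k))).
Proof.
move=> HM; apply: cvg_of_cauchyR => e e0.
have e1 : 0 < e / (2 * p n c + 1) by rewrite divr_gt0 //; have := sn_ge0 n c; lra.
have [N HN] := HM n _ e1.
exists N => k l hk hl; apply: le_lt_trans (rsn_sub_tri n _ _) _.
rewrite (rsn_teqE n (teq_D_sub _ _ _)); apply: le_lt_trans (rsn_D _ _ _) _.
apply: small_mul (HN k l hk hl); last exact: rsn_ge0.
by have := sn_ge0 n c; lra.
Qed.

Lemma cvg_qsn_tpi M n c : tensor_cauchy p I M ->
  cvgn (fun k => qsn p I n (mul c (tpi mul (M k)) - c)).
Proof.
move=> HM; apply: cvg_of_cauchyR => e e0.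
have e1 : 0 < e / (p n c + 1) by rewrite divr_gt0 //; have := sn_ge0 n c; lra.
have [N HN] := HM n _ e1.
exists N => k l hk hl; apply: le_lt_trans (qsn_sub n _ _) _.
rewrite opprB addrA subrK -mulBr -tpi_sub.
apply: le_lt_trans (qsn_mull _ _ _) _.
apply: le_lt_trans (ler_wpM2l (sn_ge0 n c) (qsn_tpi n _)) _.
apply: small_mul (HN k l hk hl); [exact: sn_ge0 | exact: rsn_ge0].
Qed.
End Alg.
Section Map.
Variable R : realType.
Variables (A : lmodType R[i]) (mulA : A -> A -> A) (p : nat -> A -> R)
          (B : lmodType R[i]) (mulB : B -> B -> B) (q : nat -> B -> R)
          (phi : A -> B) (I : set A) (J : set B).
Hypothesis FA : frechet_algebra mulA p.
Hypothesis FB : frechet_algebra mulB q.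
Hypothesis CIA : closed_ideal mulA p I.
Hypothesis CIB : closed_ideal mulB q J.
Hypothesis Hphi : continuous_hom mulA mulB p q phi.
Hypothesis HIJ : phi @` I `<=` J.

Lemma phi_lin k x y : phi (k *: x + y) = k *: phi x + phi y.
Proof. by case: Hphi. Qed.
Lemma phi_mul x y : phi (mulA x y) = mulB (phi x) (phi y).
Proof. by case: Hphi. Qed.
Lemma phiD x y : phi (x + y) = phi x + phi y.
Proof. by have := phi_lin 1 x y; rewrite !scale1r. Qed.
Lemma phi0 : phi 0 = 0.
Proof. by apply: (addrI (phi 0)); rewrite -phiD !addr0. Qed.
Lemma phiZ k x : phi (k *: x) = k *: phi x.
Proof. by have := phi_lin k x 0; rewrite !addr0 phi0 addr0. Qed.
Lemma phiN x : phi (- x) = - phi x.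
Proof. by rewrite -scaleN1r phiZ scaleN1r. Qed.
Lemma phiJ x : I x -> J (phi x).
Proof. by move=> hx; apply: HIJ; exists x. Qed.

Lemma phi_bound m : exists n (K : R), 1 <= K /\ forall y, q m (phi y) <= K * p n y.
Proof.
case: Hphi => _ _ /(_ 0 m 1 ltr01) [n [d [d0 Hd]]].
have F (t : R) y : 0 < t -> t * p n y < d -> t * q m (phi y) < 1.
  move=> t0 lt; rewrite -(sn_scaleR FB) ?ltW //.
  have := Hd (t%:C%C *: y); rewrite phi0 !subr0 phiZ; apply.
  by rewrite (sn_scaleR FA) // ltW.
have h2 : 0 <= 2 / d by rewrite divr_ge0 // ltW.
exists n, (2 / d + 1); split; first lra.
move=> y; have b0 := sn_ge0 FA n y; have a0 := sn_ge0 FB m (phi y).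
set a := q m (phi y) in a0 *; set b := p n y in b0 *.
have [bz|bp] := eqVneq b 0.
  rewrite bz mulr0; apply: contraT; rewrite -ltNge => ap.
  have ap2 : 0 < 2 / a by rewrite divr_gt0.
  have := F (2 / a) y ap2; rewrite -/a -/b bz mulr0 => /(_ d0).
  rewrite divfK ?gt_eqF //; lra.
have bp' : 0 < b by rewrite lt_neqAle eq_sym bp.
have := F (d / (2 * b)) y; rewrite -/a -/b.
have t0 : 0 < d / (2 * b) by rewrite divr_gt0 // mulr_gt0.
have tb : d / (2 * b) * b < d.
  by rewrite invfM mulrA divfK ?gt_eqF //; lra.
move=> /(_ t0 tb) h.
have h1 : a * d < 2 * b.
  by move: h; rewrite mulrC mulrA ltr_pdivrMr ?mulr_gt0 // mul1r.
have h3 : a < 2 * b / d by rewrite ltr_pdivlMr.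
rewrite mulrDl mul1r mulrAC; lra.
Qed.

Lemma qsn_phi m n (K : R) : 0 <= K -> (forall y, q m (phi y) <= K * p n y) ->
  forall x, qsn q J m (phi x) <= K * qsn p I n x.
Proof.
move=> K0 HK x; rewrite mulrC; apply: (qsn_lb_mul CIA) => // b hb.
apply: le_trans (qsn_le FB m (phi x) (phiJ hb)) _.
by rewrite -phiD mulrC; exact: HK.
Qed.

Definition tmap (s : seq (A * A)) := [seq (phi z.1, phi z.2) | z <- s].

Lemma teq_map s t : tensor_eq I s t -> tensor_eq J (tmap s) (tmap t).
Proof.
move=> H f bf fJ1 fJ2; rewrite /tmap !big_map.
apply: (H (fun x y => f (phi x) (phi y))).
- by case: bf => b1 b2; split => k x y z; rewrite phi_lin ?b1 ?b2.
- by move=> x y hx; apply: fJ1; exact: phiJ.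
- by move=> x y hy; apply: fJ2; exact: phiJ.
Qed.

Lemma TS_map m n (K : R) : 0 <= K -> (forall y, q m (phi y) <= K * p n y) ->
  forall t, TS q J m (tmap t) <= K * K * TS p I n t.
Proof.
move=> K0 HK t; rewrite /TS big_map mulr_sumr; apply: ler_sum => z _ /=.
have -> : K * K * (qsn p I n z.1 * qsn p I n z.2) =
  (K * qsn p I n z.1) * (K * qsn p I n z.2) by ring.
apply: ler_pM; try exact: (qsn_ge0 FB CIB); exact: qsn_phi.
Qed.

Lemma rsn_map m n (K : R) : 0 <= K -> (forall y, q m (phi y) <= K * p n y) ->
  forall s, rsn q J m (tmap s) <= K * K * rsn p I n s.
Proof.
move=> K0 HK s; apply: rsn_lb_mul; first exact: mulr_ge0.
move=> t ht; apply: le_trans (TS_map K0 HK t).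
apply: (rsn_le FB CIB); exact: teq_map.
Qed.

Lemma tmap_sub s t : tmap (tsub s t) = tsub (tmap s) (tmap t).
Proof.
rewrite /tmap /tsub map_cat -!map_comp; congr (_ ++ _).
by apply: eq_map => z /=; rewrite phiN.
Qed.

Lemma tmap_D a s : tmap (Dt mulA a s) = Dt mulB (phi a) (tmap s).
Proof.
rewrite /Dt tmap_sub /tmap /tlact /tract -!map_comp; congr tsub.
  by apply: eq_map => z /=; rewrite phi_mul.
by apply: eq_map => z /=; rewrite phi_mul.
Qed.

Lemma tpi_map s : tpi mulB (tmap s) = phi (tpi mulA s).
Proof.
elim: s => [|z s IH]; first by rewrite /tpi /tmap /= !big_nil phi0.
by rewrite /tpi /tmap /= !big_cons phiD phi_mul -IH.
Qed.
End Map.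
Unset Implicit Arguments.
Set Strict Implicit.
Theorem theorem2p3 (R : realType)
    (A : lmodType R[i]) (mulA : A -> A -> A) (p : nat -> A -> R)
    (B : lmodType R[i]) (mulB : B -> B -> B) (q : nat -> B -> R)
    (phi : A -> B) (I : set A) (J : set B) :
  frechet_algebra mulA p ->
  frechet_algebra mulB q ->
  continuous_hom mulA mulB p q phi ->
  dense_range q phi ->
  closed_ideal mulA p I ->
  closed_ideal mulB q J ->
  phi @` I `<=` J ->
  lb_approx_diag_mod mulA p I ->
  lb_approx_diag_mod mulB q J.
Proof.
move=> FA FB Hphi Hd CIA CIB HIJ [CA [CA0 HA]].
have ex m : exists nK : nat * R, 1 <= nK.2 /\ forall y, q m (phi y) <= nK.2 * p nK.1 y.
  by have [n [K [K1 HK]]] := phi_bound FA FB Hphi m; exists (n, K).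
have [g Hg] := choice ex.
exists (fun m => (g m).2 * (g m).2 * (CA (g m).1 + 1)); split.
  move=> m; have [K1 _] := Hg m; have := CA0 (g m).1.
  by move=> h; apply: mulr_gt0; [apply: mulr_gt0|]; lra.
move=> F HF m eps eps0.
have [K1 HK] := Hg m.
set n := (g m).1 in HK *; set K := (g m).2 in K1 HK *.
set C := CA n; have C0 : 0 < C := CA0 n.
have K0 : 0 <= K by lra.
have KK1 : 1 <= K * K by nra.
set eps' := eps / (4 * (K * K)).
have eps'0 : 0 < eps' by rewrite divr_gt0 //; nra.
have hKe : K * K * eps' = eps / 4.
  by rewrite /eps'; field; rewrite gt_eqF // -/K; lra.
have hK1e : K * eps' <= eps / 4 by rewrite -hKe; nra.
have HMc' : forall M, tensor_cauchy p I M -> tensor_cauchy q J (fun k => tmap phi (M k)).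
  move=> M HMc m' e e0; have [K1' HK'] := Hg m'.
  have e1 : 0 < e / ((g m').2 * (g m').2 + 1) by rewrite divr_gt0 //; nra.
  have [N HN] := HMc (g m').1 _ e1; exists N => k l hk hl.
  rewrite -(tmap_sub Hphi); apply: le_lt_trans (rsn_map FB CIA CIB Hphi HIJ _ HK' _) _.
    lra.
  apply: small_mul (HN k l hk hl); [nra | exact: (rsn_ge0 FA CIA)].
set d := eps / (8 * (K * K) * (C + 1)).
have d0 : 0 < d by rewrite divr_gt0 //; nra.
have hd : 2 * d * (K * K * (C + 1)) = eps / 4.
  by rewrite /d; field; rewrite gt_eqF // -/K; nra.
have exa b : exists a, q m (b - phi a) < d by exact: Hd b m d d0.
have [ap Hap] := choice exa.
set FA' := [seq a <- map ap F | `[< ~ I a >]].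
have HFA : forall a, a \in FA' -> ~ I a.
  by move=> a; rewrite mem_filter => /andP [/asboolP h _].
have [M [HMc HMb HMcomm HMid]] := HA FA' HFA n eps' eps'0.
have HMcB := HMc' M HMc.
set M' := fun k => tmap phi (M k).
have [N1 HN1] : exists N, forall k, (N <= k)%N -> rsn p I n (M k) < C + 1.
  apply: limn_lt_ev; first exact: (cvg_rsn FA CIA HMc).
  by move: HMb; rewrite -/C => h; apply: le_lt_trans h _; lra.
have HM'b k : (N1 <= k)%N -> rsn q J m (M' k) <= K * K * (C + 1).
  move=> hk; apply: le_trans (rsn_map FB CIA CIB Hphi HIJ K0 HK _) _.
  apply: ler_wpM2l; [nra | exact/ltW/HN1].
exists M'; split => //.
- apply: limn_le_ev; first exact: (cvg_rsn FB CIB HMcB).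
  by exists N1.
- move=> b bF.
  set a := ap b.
  have hab : q m (b - phi a) < d := Hap b.
  have [N2 HN2] : exists N, forall k, (N <= k)%N -> rsn p I n (Dt mulA a (M k)) <= eps'.
    case: (pselect (I a)) => Ia.
      by exists 0%N => k _; rewrite (rsn_D_I FA CIA) //; lra.
    have aF : a \in FA'.
      by rewrite mem_filter; apply/andP; split; [apply/asboolP | apply: map_f].
    have := HMcomm a aF.
    move/(limn_lt_ev (cvg_rsnD FA CIA HMc)) => [N HN]; exists N => k hk; exact/ltW/HN.
  apply: (@le_lt_trans _ _ (eps / 2)); last lra.
  apply: limn_le_ev; first exact: (cvg_rsnD FB CIB HMcB).
  exists (maxn N1 N2) => k; rewrite geq_max => /andP [h1 h2].
  rewrite (rsn_teqE FB CIB m (teq_D_split FB b (phi a) (M' k))).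
  apply: le_trans (rsn_cat FB CIB _ _ _) _.
  have e1 : rsn q J m (Dt mulB (b - phi a) (M' k)) <= eps / 4.
    apply: le_trans (rsn_D FB CIB _ _ _) _; rewrite -hd.
    rewrite -mulrA -[2 * d * _]mulrA; apply: ler_wpM2l => //.
    apply: ler_pM; [exact: (sn_ge0 FB) | exact: (rsn_ge0 FB CIB) | exact: ltW | exact: HM'b].
  have e2 : rsn q J m (Dt mulB (phi a) (M' k)) <= eps / 4.
    rewrite /M' -(tmap_D Hphi); apply: le_trans (rsn_map FB CIA CIB Hphi HIJ K0 HK _) _.
    rewrite -hKe; apply: ler_wpM2l; [nra | exact: HN2].
  lra.
- move=> b.
  set d' := eps / (4 * (K * (C + 1) + 1)).
  have d'0 : 0 < d' by rewrite divr_gt0 //; nra.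
  have hd' : d' * (K * (C + 1)) + d' = eps / 4.
    by rewrite /d'; field; rewrite gt_eqF //; nra.
  have [a hab] := Hd b m d' d'0.
  have [N3 HN3] : exists N, forall k, (N <= k)%N ->
      qsn p I n (mulA a (tpi mulA (M k)) - a) < eps'.
    apply: limn_lt_ev; [exact: (cvg_qsn_tpi FA CIA HMc) | exact: HMid].
  apply: (@le_lt_trans _ _ (eps / 2)); last lra.
  apply: limn_le_ev; first exact: (cvg_qsn_tpi FB CIB HMcB).
  exists (maxn N1 N3) => k; rewrite geq_max => /andP [h1 h3].
  rewrite /M' (tpi_map Hphi).
  set x := tpi mulA (M k).
  have -> : mulB b (phi x) - b =
      mulB (b - phi a) (phi x) + (phi (mulA a x - a) + (phi a - b)).
    rewrite (mulBl FB) (phiD Hphi) (phiN Hphi) (phi_mul Hphi).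
    by rewrite [X in _ = _ + X]addrA subrK addrA subrK.
  apply: le_trans (qsn_tri FB CIB _ _ _) _.
  apply: le_trans (lerD (lexx _) (qsn_tri FB CIB _ _ _)) _.
  have f1 : qsn q J m (mulB (b - phi a) (phi x)) <= d' * (K * (C + 1)).
    apply: le_trans (qsn_mull FB CIB _ _ _) _.
    apply: ler_pM; [exact: (sn_ge0 FB) | exact: (qsn_ge0 FB CIB) | exact: ltW |].
    apply: le_trans (qsn_phi FB CIA Hphi HIJ K0 HK x) _; apply: ler_wpM2l => //.
    apply: le_trans (qsn_tpi FA CIA n (M k)) _; exact/ltW/HN1.
  have f2 : qsn q J m (phi (mulA a x - a)) <= eps / 4.
    apply: le_trans (qsn_phi FB CIA Hphi HIJ K0 HK _) _.
    apply: le_trans hK1e; apply: ler_wpM2l => //; exact/ltW/HN3.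
  have f3 : qsn q J m (phi a - b) <= d'.
    apply: le_trans (qsn_le_p FB CIB _ _) _; rewrite -opprB (sn_opp FB); exact: ltW.
  lra.
Qed.
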